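(* Let $n\in\mathbb N$ and let $X\subseteq[0,1]$ be an arbitrary subset. Then the set $$Y_n(X):=\{\mathbf y\in S:\ \operatorname{rint}I_j(\mathbf y)\not\subseteq X\ \text{for } j=0,1,\dots,n\}$$ is open and pathwise connected. In particular, the regularity set $Y$ associated with any $n$-field function $J$ and any singular kernel functions $K_1,\dots,K_n$ is open and pathwise connected.
   Context: $S=\{\mathbf y\in\mathbb R^n:0<y_1<\dots<y_n<1\}$. Set $y_0:=0$ and $y_{n+1}:=1$, and let $I_j(\mathbf y)=[y_j,y_{j+1}]$ for $j=0,\dots,n$. $\operatorname{rint}$ denotes the interior relative to $[0,1]$; thus $\operatorname{rint}I_0(\mathbf y)=[0,y_1)$, $\operatorname{rint}I_n(\mathbf y)=(y_n,1]$, and $\operatorname{rint}I_j(\mathbf y)=(y_j,y_{j+1})$ for $0<j<n$. For singular kernel functions $K_1,\dots,K_n$ (concave on $(-1,0)$ and on $(0,1)$, with $\lim_{t\to0}K_i(t)=-\infty$) and an $n$-field function $J:[0,1]\to[-\infty,\infty)$, the regularity set is $Y=\{\mathbf y\in S:\sup_{t\in I_j(\mathbf y)}\bigl(J(t)+\sum_iK_i(t-y_i)\bigr)\neq-\infty\ \forall j\}$. This set equals $Y_n(X)$ with $X=\{t\in[0,1]:J(t)=-\infty\}$. An $n$-field function is bounded above, and its set of finite values has total weight greater than $n$, where $0$ and $1$ have weight $1/2$ and interior points have weight $1$. *)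

(* Defs.v *)
From HB Require Import structures.
From mathcomp Require Import all_boot all_order all_algebra.
From mathcomp Require Import all_classical all_reals all_analysis.
Set Implicit Arguments. Unset Strict Implicit. Unset Printing Implicit Defensive.
Import Order.TTheory GRing.Theory Num.Theory.
Import numFieldNormedType.Exports.
Local Open Scope classical_set_scope.
Local Open Scope ring_scope.

Section Defs.
Variable R : realType.

Definition path_connected {V : topologicalType} (A : set V) : Prop :=
  forall x y, A x -> A y ->
    exists f : R -> V,
      {within [set` `[0%R, 1%R]], continuous f} /\ f 0 = x /\ f 1 = y /\
      (forall t, [set` `[0%R, 1%R]] t -> A (f t)).

Variable n : nat.

(** yext y j = y_j with the conventions y_0 = 0 and y_{n+1} = 1
    (the paper's y_1..y_n are the entries y 0 0 .. y 0 (n-1)). *)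
Definition yext (y : 'rV[R]_n) (j : nat) : R :=
  nth 1 (0 :: [seq y ord0 i | i <- enum 'I_n]) j.

Definition simplexS : set 'rV[R]_n :=
  [set y | forall j : nat, (j <= n)%N -> yext y j < yext y j.+1].

Definition Iint (y : 'rV[R]_n) (j : nat) : set R := [set` `[yext y j, yext y j.+1]].

(** rint I_j(y): interior of I_j(y) relative to [0,1]. *)
Definition rintI (y : 'rV[R]_n) (j : nat) : set R :=
  [set t | (if j == 0%N then 0 <= t else yext y j < t) /\
           (if j == n then t <= 1 else t < yext y j.+1)].

Definition Yn (X : set R) : set 'rV[R]_n :=
  [set y | simplexS y /\ forall j : nat, (j <= n)%N -> ~ (rintI y j `<=` X)].

Definition pt_weight (t : R) : R := if (t == 0) || (t == 1) then 2^-1 else 1.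

Definition nfield_fun (J : R -> \bar R) : Prop :=
  (forall t, [set` `[0%R, 1%R]] t -> J t != +oo%E) /\
  (exists M : R, forall t, [set` `[0%R, 1%R]] t -> (J t <= M%:E)%E) /\
  (exists s : seq R, uniq s /\
     (forall t, t \in s -> [set` `[0%R, 1%R]] t /\ J t \is a fin_num) /\
     n%:R < \sum_(t <- s) pt_weight t).

Definition concave_on (D : set R) (f : R -> R) : Prop :=
  forall x z l, D x -> D z -> 0 <= l -> l <= 1 ->
    l * f x + (1 - l) * f z <= f (l * x + (1 - l) * z).

(** singular kernel function (given by its values off 0; its value at 0 is
    taken to be the limit -oo, see kext). *)
Definition singular_kernel (K : R -> R) : Prop :=
  concave_on [set` `]-1%R, 0%R[] K /\ concave_on [set` `]0%R, 1%R[] K /\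
  K x @[x --> 0^'] --> -oo.

Definition kext (K : R -> R) (t : R) : \bar R :=
  if t == 0 then -oo%E else (K t)%:E.

Definition Yreg (J : R -> \bar R) (K : 'I_n -> R -> R) : set 'rV[R]_n :=
  [set y | simplexS y /\ forall j : nat, (j <= n)%N ->
     ereal_sup [set (J t + \sum_(i < n) kext (K i) (t - y ord0 i))%E
               | t in Iint y j] != -oo%E].

End Defs.

(* Main.v *)
Require Import Defs.
From HB Require Import structures.
From mathcomp Require Import ring lra.
From mathcomp Require Import all_boot all_order all_algebra.
From mathcomp Require Import all_classical all_reals all_analysis.
Import Order.TTheory GRing.Theory Num.Theory.
Import numFieldNormedType.Exports.
Local Open Scope classical_set_scope.
Local Open Scope ring_scope.

Section S.
Variable R : realType.
Variable n : nat.
Implicit Types y v a : 'rV[R]_n.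

Lemma yext0 y : yext y 0 = 0.
Proof. by []. Qed.

Lemma yextS y (i : 'I_n) : yext y i.+1 = y ord0 i.
Proof.
rewrite /yext /= (nth_map i) ?size_enum_ord //.
by rewrite nth_ord_enum.
Qed.

Lemma yext_big y k : (n < k)%N -> yext y k = 1.
Proof.
case: k => // k nk; rewrite /yext /= nth_default // size_map size_enum_ord.
by [].
Qed.

Lemma coord_cont (i : 'I_n) : continuous (fun y : 'rV[R]_n => y ord0 i).
Proof.
move=> u A /nbhs_ballP[e /= e0 eA].
apply/nbhs_ballP; exists e => //= v [_ uv]; apply: eA; exact: uv.
Qed.

Lemma yext_cont k : continuous (fun y : 'rV[R]_n => yext y k).
Proof.
case: k => [|k]; first exact: cst_continuous.
case: (ltnP k n) => kn.
  have -> : (fun y : 'rV[R]_n => yext y k.+1) = (fun y => y ord0 (Ordinal kn)).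
    by apply: funext => y; rewrite -(yextS y (Ordinal kn)).
  exact: coord_cont.
have -> : (fun y : 'rV[R]_n => yext y k.+1) = (fun _ => 1).
  by apply: funext => y; rewrite yext_big.
exact: cst_continuous.
Qed.

Lemma row_cont (f : R -> 'rV[R]_n) :
  (forall i, continuous (fun t => f t ord0 i)) -> continuous f.
Proof.
move=> c t A /nbhs_ballP[e /= e0 eA].
have : \forall s \near t, forall ij : 'I_1 * 'I_n, ball (f t ij.1 ij.2) e (f s ij.1 ij.2).
  apply: (@filter_forall _ _ (fun ij s => ball (f t ij.1 ij.2) e (f s ij.1 ij.2)) (nbhs t)).
  move=> [i j] /=; rewrite (ord1 i).
  by apply: (c j t (ball (f t ord0 j) e)); apply: nbhsx_ballx.
apply: filterS => s H; apply: eA; split => // i j; exact: (H (i, j)).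
Qed.

Lemma yext_row (F : nat -> R) :
  F 0%N = 0 -> (forall k, (n < k)%N -> F k = 1) ->
  forall k, yext (\row_(i < n) F i.+1) k = F k.
Proof.
move=> F0 F1 [|k]; first by rewrite yext0.
case: (ltnP k n) => kn.
  by rewrite -[k]/(nat_of_ord (Ordinal kn)) yextS mxE.
by rewrite yext_big // F1.
Qed.

Variable X : set R.

Lemma rintI_sub y v k : yext v k <= yext y k -> yext y k.+1 <= yext v k.+1 ->
  rintI y k `<=` rintI v k.
Proof.
move=> h1 h2 t [H1 H2]; split.
  by case: (k == 0%N) H1 => // H1; apply: le_lt_trans H1.
by case: (k == n) H2 => // H2; apply: lt_le_trans h2.
Qed.

Lemma sandwich v :
  (forall k, (k <= n)%N -> exists a, @Yn R n X a /\ yext v k <= yext a k /\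
      yext a k.+1 <= yext v k.+1) -> @Yn R n X v.
Proof.
move=> H; split.
  move=> k kn; have [a [[Sa _] [h1 h2]]] := H k kn.
  exact: le_lt_trans h1 (lt_le_trans (Sa k kn) h2).
move=> k kn sub; have [a [[_ Ya] [h1 h2]]] := H k kn.
by apply: (Ya k kn); apply: subset_trans sub; apply: rintI_sub.
Qed.

Definition cl (x : R) : R := Num.min (Num.max x 0) 1.

Lemma cl0 x : x <= 0 -> cl x = 0.
Proof. by move=> h; rewrite /cl (max_r h) (min_l (@ler01 R)). Qed.

Lemma cl1 x : 1 <= x -> cl x = 1.
Proof.
move=> h; rewrite /cl max_l ?(le_trans (@ler01 R)) //; exact: min_r.
Qed.

Lemma cl_ge0 x : 0 <= cl x.
Proof. by rewrite /cl le_min ler01 le_max lexx orbT. Qed.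

Lemma cl_le1 x : cl x <= 1.
Proof. by rewrite /cl ge_min lexx orbT. Qed.


Definition Vf (Y W Z : nat -> R) (s : R) (k : nat) : R :=
  Y k + (W k - Y k) * cl (s - n%:R + k%:R) - (W k - Z k) * cl (s - n%:R - k%:R + 1).

Lemma Vf_cases Y W Z s k :
  W 0%N = Y 0%N -> W 0%N = Z 0%N -> (forall k, Y k <= W k) -> (forall k, Z k <= W k) ->
  (Vf Y W Z s k <= W k /\ W k.+1 <= Vf Y W Z s k.+1) \/
  (Vf Y W Z s k <= Y k /\ Y k.+1 <= Vf Y W Z s k.+1) \/
  (Vf Y W Z s k <= Z k /\ Z k.+1 <= Vf Y W Z s k.+1).
Proof.
move=> WY0 WZ0 YW ZW; rewrite /Vf.
have kS : (k.+1)%:R = k%:R + 1 :> R by rewrite -natr1.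
have k0 : 0 <= k%:R :> R by rewrite ler0n.
rewrite kS.
have := YW k; have := YW k.+1; have := ZW k; have := ZW k.+1.
have := cl_ge0 (s - n%:R + k%:R); have := cl_le1 (s - n%:R + k%:R).
have := cl_ge0 (s - n%:R + (k%:R + 1)); have := cl_le1 (s - n%:R + (k%:R + 1)).
have := cl_ge0 (s - n%:R - k%:R + 1); have := cl_le1 (s - n%:R - k%:R + 1).
have := cl_ge0 (s - n%:R - (k%:R + 1) + 1); have := cl_le1 (s - n%:R - (k%:R + 1) + 1).
case: (lerP s n%:R) => sn.
-
  have p1 : (W k.+1 - Z k.+1) * cl (s - n%:R - (k%:R + 1) + 1) = 0.
    by rewrite cl0 ?mulr0 //; lra.
  have p0 : (W k - Z k) * cl (s - n%:R - k%:R + 1) = 0.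
    case: k kS k0 {p1} => [|k] kS k0; first by rewrite WZ0 subrr mul0r.
    have : 1 <= (k.+1)%:R :> R by rewrite ler1n.
    by move=> ?; rewrite cl0 ?mulr0 //; lra.
  rewrite p0 p1.
  case: (lerP 0 (s - n%:R + k%:R)) => h.
    rewrite (@cl1 (s - n%:R + (k%:R + 1))); last lra.
    set c := cl (s - n%:R + k%:R).
    move=> *; left; split; nra.
  rewrite (@cl0 (s - n%:R + k%:R)); last lra.
  set c := cl (s - n%:R + (k%:R + 1)).
  move=> *; right; left; split; nra.
-
  have p1 : (W k.+1 - Y k.+1) * cl (s - n%:R + (k%:R + 1)) = W k.+1 - Y k.+1.
    by rewrite cl1 ?mulr1 //; lra.
  have p0 : (W k - Y k) * cl (s - n%:R + k%:R) = W k - Y k.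
    case: k kS k0 {p1} => [|k] kS k0; first by rewrite WY0 !subrr mul0r.
    have : 1 <= (k.+1)%:R :> R by rewrite ler1n.
    by move=> ?; rewrite cl1 ?mulr1 //; lra.
  rewrite p0 p1.
  case: (lerP 0 (s - n%:R - k%:R)) => h.
    rewrite (@cl1 (s - n%:R - k%:R + 1)); last lra.
    set c := cl (s - n%:R - (k%:R + 1) + 1).
    move=> *; right; right; split; nra.
  rewrite (@cl0 (s - n%:R - (k%:R + 1) + 1)); last lra.
  set c := cl (s - n%:R - k%:R + 1).
  move=> *; left; split; nra.
Qed.


Lemma cl_cont : continuous cl.
Proof.
move=> x.
apply: (@continuous_min R R (fun x => Num.max x 0) (fun=> 1) x); last exact: cvg_cst.
apply: (@continuous_max R R id (fun=> 0) x); last exact: cvg_cst.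
exact: cvg_id.
Qed.

Lemma Vf_cont (Y W Z : nat -> R) (c : R) (k : nat) : continuous (fun t : R => Vf Y W Z (t * c) k).
Proof.
move=> t; rewrite /Vf.
apply: cvgB; [apply: cvgD; [exact: cvg_cst|]|].
  apply: cvgM; first exact: cvg_cst.
  apply: (@continuous_comp _ _ _ (fun x : R => x * c - n%:R + k%:R) cl); last exact: cl_cont.
  apply: cvgD; last exact: cvg_cst; apply: cvgB; last exact: cvg_cst.
  by apply: cvgMl; exact: cvg_id.
apply: cvgM; first exact: cvg_cst.
apply: (@continuous_comp _ _ _ (fun x : R => x * c - n%:R - k%:R + 1) cl); last exact: cl_cont.
apply: cvgD; last exact: cvg_cst; apply: cvgB; last exact: cvg_cst.
apply: cvgB; last exact: cvg_cst.
by apply: cvgMl; exact: cvg_id.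
Qed.


Lemma Yn_pc : path_connected R (@Yn R n X).
Proof.
move=> y z Yy Yz.
pose W k := Num.max (yext y k) (yext z k).
have W0 : W 0%N = 0 by rewrite /W !yext0 maxxx.
have W1 : forall k, (n < k)%N -> W k = 1 by move=> k kn; rewrite /W !yext_big // maxxx.
pose w := \row_(i < n) W i.+1.
have yw : forall k, yext w k = W k := @yext_row W W0 W1.
have YW : forall k, yext y k <= W k by move=> k; rewrite /W le_max lexx.
have ZW : forall k, yext z k <= W k by move=> k; rewrite /W le_max lexx orbT.
have Yw : Yn X w.
  apply: sandwich => k kn; case: (lerP (yext z k) (yext y k)) => h.
    exists y; split => //; rewrite !yw; split => //.
    by rewrite /W max_l.
  exists z; split => //; rewrite !yw; split => //.
  by rewrite /W max_r // ltW.
pose c : R := n%:R + n%:R.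
pose V := Vf (yext y) W (yext z).
have V0 : forall s, V s 0%N = 0.
  by move=> s; rewrite /V /Vf W0 !yext0 !subrr !mul0r; lra.
have V1 : forall s k, (n < k)%N -> V s k = 1.
  by move=> s k kn; rewrite /V /Vf W1 // !yext_big // !subrr !mul0r; lra.
pose f (t : R) := \row_(i < n) V (t * c) i.+1.
have fV : forall t k, yext (f t) k = V (t * c) k.
  by move=> t; apply: (@yext_row (V (t * c))); [apply: V0|apply: V1].
exists f; split.
  apply: continuous_subspaceT; apply: row_cont => i.
  have -> : (fun t => f t ord0 i) = (fun t => V (t * c) i.+1).
    by apply: funext => t; rewrite mxE.
  exact: Vf_cont.
split.
  apply/rowP => i; rewrite mxE /V /Vf mul0r yextS.
  have lin : (i.+1 <= n)%N := ltn_ord i.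
  have : (i.+1)%:R <= n%:R :> R by rewrite ler_nat.
  rewrite -natr1 => hi; have := ler0n R i => h0.
  by rewrite !cl0 ?mulr0 ?subr0 ?addr0 //; lra.
split.
  apply/rowP => i; rewrite mxE /V /Vf mul1r yextS /c.
  have lin : (i.+1 <= n)%N := ltn_ord i.
  have : (i.+1)%:R <= n%:R :> R by rewrite ler_nat.
  rewrite -natr1 => hi; have := ler0n R i => h0.
  rewrite !cl1 ?mulr1; [|lra|lra].
  rewrite (yextS z); lra.
move=> t _; apply: sandwich => k kn.
have e1 : W 0%N = yext y 0%N by rewrite W0 yext0.
have e2 : W 0%N = yext z 0%N by rewrite W0 yext0.
have := @Vf_cases (yext y) W (yext z) (t * c) k e1 e2 YW ZW.
rewrite -/V -!fV.
case=> [[h1 h2]|[[h1 h2]|[h1 h2]]].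
- by exists w; rewrite !yw.
- by exists y.
- by exists z.
Qed.


Lemma near_lt (g h : 'rV[R]_n -> R) y : continuous g -> continuous h ->
  g y < h y -> \forall v \near y, g v < h v.
Proof.
move=> cg ch lt.
have := @cvgr_gt _ _ _ _ _ _ (cvgB (ch y) (cg y)) 0; rewrite subr_gt0 => /(_ _ _ lt).
by apply: filterS => v; rewrite subr_gt0.
Qed.

Lemma Yn_open : open (@Yn R n X).
Proof.
rewrite openE => y [Sy Ry]; rewrite /interior.
have : \forall v \near y, forall j : 'I_n.+1,
    yext v j < yext v j.+1 /\ exists t, rintI v j t /\ ~ X t.
  apply: (@filter_forall _ _ (fun (j : 'I_n.+1) v =>
    yext v j < yext v j.+1 /\ exists t, rintI v j t /\ ~ X t) (nbhs y)) => j.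
  have jn : (j <= n)%N by rewrite -ltnS.
  have /existsNP[t /not_implyP[[rt1 rt2] nXt]] := Ry j jn.
  have A : \forall v \near y, yext v j < yext v j.+1.
    apply: (@near_lt (fun v => yext v j) (fun v => yext v j.+1) y).
    - exact: yext_cont.
    - exact: yext_cont.
    - exact: Sy.
  have B : \forall v \near y, (if nat_of_ord j == 0%N then 0 <= t else yext v j < t).
    move: rt1; case: ifP => _ h; first exact: filterE.
    apply: (@near_lt (fun v => yext v j) (fun _ => t) y) => //.
    - exact: yext_cont.
    - exact: cst_continuous.
  have C : \forall v \near y, (if nat_of_ord j == n then t <= 1 else t < yext v j.+1).
    move: rt2; case: ifP => _ h; first exact: filterE.
    apply: (@near_lt (fun _ => t) (fun v => yext v j.+1) y) => //.
    - exact: cst_continuous.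
    - exact: yext_cont.
  apply: filterS (filterI A (filterI B C)) => v [a [b c]].
  by split => //; exists t.
apply: filterS => v H; split.
  move=> k kn; have := H (Ordinal (kn : (k < n.+1)%N)); case => //.
move=> k kn sub; have [_ [t [rt nXt]]] := H (Ordinal (kn : (k < n.+1)%N)).
by apply: nXt; apply: sub.
Qed.


End S.

Section P2.
Variable R : realType.
Variable n : nat.
Implicit Types y : 'rV[R]_n.

Lemma yext_le y : simplexS y -> forall k l, (k <= l)%N -> (l <= n.+1)%N ->
  yext y k <= yext y l.
Proof.
move=> Sy k l kl; elim: l kl => [|l IH] kl ln.
  by rewrite leqn0 in kl; rewrite (eqP kl).
case: (ltngtP k l.+1) kl => // [kl _|-> _ //].
apply: le_trans (IH kl (ltnW ln)) (ltW (Sy l _)); by [].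
Qed.

Lemma yext_lt y : simplexS y -> forall k l, (k < l)%N -> (l <= n.+1)%N ->
  yext y k < yext y l.
Proof.
move=> Sy k [|l] // kl ln.
have h1 := @yext_le y Sy k l kl (ltnW ln).
have h2 : yext y l < yext y l.+1 by apply: Sy.
exact: le_lt_trans h1 h2.
Qed.

Lemma elem_neq (J : R -> \bar R) (K : 'I_n -> R -> R) y t :
  (J t + \sum_(i < n) kext (K i) (t - y ord0 i) != -oo)%E <->
  (J t != -oo)%E /\ forall i, t != y ord0 i.
Proof.
rewrite adde_eq_ninfty negb_or esum_eqNy; split.
  move=> /andP[-> /existsPn H]; split => // i; have := H i.
  rewrite /kext subr_eq0; have [e|ne] := eqVneq t (y ord0 i); last by []. by rewrite eqxx andbT.
move=> [-> H] /=; apply/existsPn => i; rewrite /kext subr_eq0.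
by rewrite (negbTE (H i)) andbF.
Qed.


Lemma rint_Iint y j t : simplexS y -> (j <= n)%N -> rintI y j t ->
  Iint y j t /\ forall i, t != y ord0 i.
Proof.
move=> Sy jn [h1 h2]; split.
  rewrite /Iint /= in_itv /=; apply/andP; split.
    move: h1; case: ifP => [/eqP -> |_ /ltW //]; by rewrite yext0.
  move: h2; case: ifP => [/eqP -> |_ /ltW //]; by rewrite yext_big.
move=> i; rewrite -yextS; apply/eqP => e; subst t.
case: (leqP i.+1 j) => ij.
  move: h1; case: ifP => [/eqP j0|_]; first by rewrite j0 in ij.
  have := @yext_le y Sy i.+1 j ij (leqW jn).
  by rewrite leNgt => /negP.
move: h2; case: ifP => [/eqP jn'|_]; first by subst j; rewrite ltnNge (ltn_ord i) in ij.
have := @yext_le y Sy j.+1 i.+1 ij (leqW (ltn_ord i)).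
by rewrite leNgt => /negP.
Qed.

Lemma Iint_rint y j t : simplexS y -> (j <= n)%N -> Iint y j t ->
  (forall i, t != y ord0 i) -> rintI y j t.
Proof.
move=> Sy jn; rewrite /Iint /= in_itv /= => /andP[h1 h2] H; split.
  case: ifP => [/eqP j0|j0]; first by move: h1; rewrite j0 yext0.
  case: j jn h1 h2 j0 => [//|j] jn h1 h2 _.
  by rewrite lt_neqAle h1 andbT; have := H (Ordinal jn); rewrite -yextS eq_sym.
case: ifP => [/eqP jn'|jn']; first by move: h2; rewrite jn' yext_big.
have jn2 : (j < n)%N by rewrite ltn_neqAle jn' jn.
by rewrite lt_neqAle h2 andbT; have := H (Ordinal jn2); rewrite -yextS.
Qed.

Lemma Yreg_eq (J : R -> \bar R) (K : 'I_n -> R -> R) :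
  Yreg J K = Yn [set t | J t = -oo%E].
Proof.
apply/seteqP; split => y [Sy H]; split => // j jn.
  move=> sub; have := H j jn; apply/negP; rewrite negbK; apply/eqP.
  apply/ereal_sup_ninfty => _ [t It <-] /=.
  apply/eqP; apply/negPn/negP => /elem_neq [Jt Hi].
  by move/eqP: Jt; apply; apply: sub; apply: Iint_rint.
have /existsNP[t /not_implyP[rt nXt]] := H j jn.
have [It Hi] := @rint_Iint y j t Sy jn rt.
apply/negP => /eqP /ereal_sup_ninfty sub.
have : [set (J t + \sum_(i < n) kext (K i) (t - y ord0 i))%E | t in Iint y j]
   (J t + \sum_(i < n) kext (K i) (t - y ord0 i))%E by exists t.
move/sub => /= /eqP; apply/negP; apply/elem_neq; split => //.
by apply/eqP.
Qed.

End P2.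

Theorem proposition4p1 (R : realType) (n : nat) :
  (forall X : set R, X `<=` [set` `[0%R, 1%R]] ->
     open (@Yn R n X) /\ path_connected R (@Yn R n X)) /\
  (forall (J : R -> \bar R) (K : 'I_n -> R -> R),
     @nfield_fun R n J -> (forall i, singular_kernel (K i)) ->
     open (Yreg J K) /\ path_connected R (Yreg J K)).
Proof.
split.
  by move=> X _; split; [exact: Yn_open|exact: Yn_pc].
move=> J K _ _; rewrite Yreg_eq; split; [exact: Yn_open|exact: Yn_pc].
Qed.
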